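(* Let $n\ge1$, let $0<x_1<x_2<\dots<x_{n+1}<1$, and let $A$ be the $(n+1)\times(n+1)$ Bernstein–Vandermonde matrix, $a_{r,c}=\binom{n}{c-1}x_r^{\,c-1}(1-x_r)^{n-c+1}$. Then all pivots of the Neville elimination of $A^T$ are nonzero, and its multipliers $\widetilde m_{i,j}$ satisfy, for $1\le j\le n$ and $j+1\le i\le n+1$, $$\widetilde m_{i,j}=\frac{(n-i+2)\,x_j}{(i-1)(1-x_j)}.$$
   Context: Neville elimination of a nonsingular $N\times N$ matrix $M$: set $M_1=M$ and, for $t=1,\dots,N-1$, obtain $M_{t+1}=(a^{(t+1)}_{i,j})$ from $M_t=(a^{(t)}_{i,j})$ by $a^{(t+1)}_{i,j}=a^{(t)}_{i,j}$ if $i\le t$; $a^{(t+1)}_{i,j}=a^{(t)}_{i,j}-\big(a^{(t)}_{i,t}/a^{(t)}_{i-1,t}\big)a^{(t)}_{i-1,j}$ if $i\ge t+1$ and $j\ge t+1$; and $a^{(t+1)}_{i,j}=0$ otherwise. The pivot $(i,j)$ is $p_{i,j}=a^{(j)}_{i,j}$ for $1\le j\le i\le N$, and the multiplier is $p_{i,j}/p_{i-1,j}$ for $j<i$. Here $\widetilde m_{i,j}$ denotes the multipliers of the Neville elimination applied to $A^T$. *)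

(* Defs.v *)
From mathcomp Require Import all_boot all_order all_algebra.
Set Implicit Arguments. Unset Strict Implicit. Unset Printing Implicit Defensive.
Import Order.TTheory GRing.Theory Num.Theory.
Local Open Scope ring_scope.

Section Neville.
Variable R : fieldType.

(* 1-based entries of a square matrix: mx1 M i j = M_{i,j} for 1 <= i,j <= N,
   and 0 outside that range. *)
Definition mx1 (N : nat) (M : 'M[R]_N) (i j : nat) : R :=
  match (insub i.-1 : option 'I_N), (insub j.-1 : option 'I_N) with
  | Some i', Some j' => if (0 < i)%N && (0 < j)%N then M i' j' else 0
  | _, _ => 0
  end.

Definition nev_step (t : nat) (a : nat -> nat -> R) : nat -> nat -> R :=
  fun i j =>
    if (i <= t)%N then a i j
    else if (t.+1 <= j)%N then a i j - (a i t / a i.-1 t) * a i.-1 j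
    else 0.

(* nev_mat a k = M_{k+1}  (so nev_mat a 0 = M_1 = M). *)
Fixpoint nev_mat (a : nat -> nat -> R) (k : nat) : nat -> nat -> R :=
  match k with
  | 0 => a
  | k'.+1 => nev_step k (nev_mat a k')
  end.

(* Pivot p_{i,j} = a^{(j)}_{i,j}, meaningful for 1 <= j <= i <= N. *)
Definition nev_pivot (N : nat) (M : 'M[R]_N) (i j : nat) : R :=
  nev_mat (mx1 M) j.-1 i j.

Definition nev_mult (N : nat) (M : 'M[R]_N) (i j : nat) : R :=
  nev_pivot M i j / nev_pivot M i.-1 j.

End Neville.

(* Bernstein-Vandermonde matrix, 0-based indices r, c < n+1,
   entry (r+1, c+1) = C(n,c) x_{r+1}^c (1 - x_{r+1})^(n-c). *)
Definition bernstein_vandermonde (R : fieldType) (n : nat) (x : nat -> R)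
  : 'M[R]_n.+1 :=
  \matrix_(r < n.+1, c < n.+1)
     ('C(n, c)%:R * x r.+1 ^+ c * (1 - x r.+1) ^+ (n - c)).

(* Main.v *)
Require Import Defs.
From mathcomp Require Import all_boot all_order all_algebra.
From mathcomp Require Import zify ring lra.
Import Order.TTheory GRing.Theory Num.Theory.
Local Open Scope ring_scope.

Section Proof.
Set Implicit Arguments. Unset Strict Implicit.
Set Default Proof Using "All".
Variable R : realFieldType.
Variable n : nat.
Variable x : nat -> R.
Hypothesis x1 : (0:R) < x 1%N.
Hypothesis xinc : forall r : nat, (1 <= r <= n)%N -> x r < x r.+1.
Hypothesis xN : x n.+1 < 1.

Let M := (bernstein_vandermonde n x)^T.

Lemma xlt a b : (1 <= a)%N -> (a < b)%N -> (b <= n.+1)%N -> x a < x b.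
Proof.
move=> Ha Hab; elim: b Hab => [//|b IH] Hb Hbn.
have Hb1 : (1 <= b <= n)%N by apply/andP; split; lia.
case: (ltngtP a b) => Hab.
- have h1 : x a < x b by apply: IH; lia.
  have h2 := xinc Hb1; lra.
- lia.
- by subst; apply: xinc.
Qed.

Lemma xpos j : (1 <= j)%N -> (j <= n.+1)%N -> (0:R) < x j /\ x j < 1.
Proof.
move=> H1 H2; split.
- case: (ltngtP 1 j) => H; last by subst. 
  + have := xlt (leqnn 1%N) H H2; move=> h; exact: (lt_trans x1 h).
  + lia.
- case: (ltngtP j n.+1) => H; last by subst.
  + have := xlt H1 H (leqnn _); move=> h; exact: (lt_trans h xN).
  + lia.
Qed.

Lemma x_neq0 j : (1 <= j)%N -> (j <= n.+1)%N -> x j != 0.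
Proof. by move=> H1 H2; have [h _] := xpos H1 H2; rewrite gt_eqF. Qed.

Lemma omx_neq0 j : (1 <= j)%N -> (j <= n.+1)%N -> 1 - x j != 0.
Proof. by move=> H1 H2; have [_ h] := xpos H1 H2; rewrite subr_eq0 eq_sym lt_eqF. Qed.

Definition y j := x j / (1 - x j).
Definition cc i : R := ('C(n, i.-1))%:R.
Definition w j := (1 - x j) ^+ n.
Definition P s z := \prod_(l < s) (z - y l.+1).

Definition f k i j := if (j <= minn k i.-1)%N then 0
  else cc i * w j * y j ^+ (i.-1 - minn k i.-1) * P (minn k i.-1) (y j).

Lemma y_neq0 j : (1 <= j)%N -> (j <= n.+1)%N -> y j != 0.
Proof. by move=> H1 H2; rewrite /y mulf_neq0 ?invr_eq0 ?x_neq0 ?omx_neq0. Qed.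

Lemma y_diff a b : (1 <= a)%N -> (a < b)%N -> (b <= n.+1)%N -> y b - y a != 0.
Proof.
move=> Ha Hab Hb.
have na : 1 - x a != 0 by apply: omx_neq0; lia.
have nb : 1 - x b != 0 by apply: omx_neq0; lia.
have -> : y b - y a = (x b - x a) / ((1 - x a) * (1 - x b)).
  by rewrite /y; field; rewrite na nb.
rewrite mulf_neq0 // ?invr_eq0 ?mulf_neq0 //.
by rewrite subr_eq0 gt_eqF // xlt.
Qed.

Lemma P_neq0 k : (k.+1 <= n.+1)%N -> P k (y k.+1) != 0.
Proof.
move=> Hk; apply/prodf_neq0 => l _; have := ltn_ord l; move=> hl; apply: y_diff => //; lia.
Qed.

Lemma cc_neq0 i : (1 <= i)%N -> (i <= n.+1)%N -> cc i != 0.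
Proof. by move=> H1 H2; rewrite /cc pnatr_eq0 -lt0n bin_gt0; lia. Qed.

Lemma w_neq0 j : (1 <= j)%N -> (j <= n.+1)%N -> w j != 0.
Proof. by move=> H1 H2; rewrite expf_neq0 ?omx_neq0. Qed.

Lemma mx1E i j : (1 <= i)%N -> (i <= n.+1)%N -> (1 <= j)%N -> (j <= n.+1)%N ->
  mx1 M i j = cc i * x j ^+ i.-1 * (1 - x j) ^+ (n - i.-1).
Proof.
move=> H1 H2 H3 H4.
have hi : (i.-1 < n.+1)%N by lia.
have hj : (j.-1 < n.+1)%N by lia.
rewrite /mx1 (insubT (fun k => k < n.+1)%N hi) (insubT (fun k => k < n.+1)%N hj).
have -> : ((0 < i)%N && (0 < j)%N) = true by apply/andP; split; lia.
rewrite /M !mxE /=.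
have -> : j.-1.+1 = j by lia.
by [].
Qed.

Lemma nev_formula k i j : (1 <= i)%N -> (i <= n.+1)%N -> (1 <= j)%N -> (j <= n.+1)%N ->
  nev_mat (mx1 M) k i j = f k i j.
Proof.
elim: k i j => [|k IH] i j H1 H2 H3 H4.
- rewrite /= mx1E // /f.
  have -> : minn 0 i.-1 = 0%N by lia.
  have -> : (j <= 0)%N = false by lia.
  rewrite subn0 /P big_ord0 mulr1 /w /y.
  have hx := omx_neq0 H3 H4.
  have -> : n = ((n - i.-1) + i.-1)%N by lia.
  rewrite addnK exprD expr_div_n.
  by field; rewrite expf_neq0.
- rewrite /= /nev_step.
  case: (leqP i k.+1) => Hik.
  + rewrite IH // /f.
    have -> : minn k.+1 i.-1 = minn k i.-1 by lia.
    by [].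
  case: (leqP k.+2 j) => Hkj.
  + rewrite !IH //; try lia.
    rewrite /f.
    have -> : minn k i.-1 = k by lia.
    have -> : minn k i.-1.-1 = k by lia.
    have -> : minn k.+1 i.-1 = k.+1 by lia.
    have -> : (j <= k)%N = false by lia.
    have -> : (j <= k.+1)%N = false by lia.
    have -> : (k.+1 <= k)%N = false by lia.
    rewrite /=.
    have -> : (i.-1 - k = (i.-1.-1 - k).+1)%N by lia.
    have -> : (i.-1 - k.+1 = i.-1.-1 - k)%N by lia.
    rewrite /P big_ord_recr /=.
    have hc' : cc i.-1 != 0 by apply: cc_neq0; lia.
    have hw : w k.+1 != 0 by apply: w_neq0; lia.
    have hy : y k.+1 != 0 by apply: y_neq0; lia.
    have hp : P k (y k.+1) != 0 by apply: P_neq0; lia.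
    have hye : y k.+1 ^+ (i.-1.-1 - k) != 0 by rewrite expf_neq0.
    rewrite /P in hp.
    move: hc' hw hy hp hye.
    set C1 := cc i.-1; set W := w k.+1; set Z := y k.+1;
      set Pz := \prod_(_ < k) _; set e := (i.-1.-1 - k)%N.
    move=> hc' hw hy hp hye.
    rewrite !exprSr.
    set Ze := Z ^+ e in hye *.
    field.
    by apply/and4P; split.
  + rewrite /f.
    have -> : minn k.+1 i.-1 = k.+1 by lia.
    by rewrite ifT //; lia.
Qed.

End Proof.

Theorem mainTheorem6 (R : realFieldType) (n : nat) (x : nat -> R) :
  (1 <= n)%N ->
  0 < x 1%N ->
  (forall r : nat, (1 <= r <= n)%N -> x r < x r.+1) ->
  x n.+1 < 1 ->
  (forall i j : nat, (1 <= j)%N -> (j <= i)%N -> (i <= n.+1)%N ->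
     nev_pivot (bernstein_vandermonde n x)^T i j != 0) /\
  (forall i j : nat, (1 <= j <= n)%N -> (j.+1 <= i <= n.+1)%N ->
     nev_mult (bernstein_vandermonde n x)^T i j =
       ((n.+2 - i)%:R * x j) / ((i.-1)%:R * (1 - x j))).
Proof.
move=> Hn x10 xinc xN.
have x1 : (0:R) < x 1%N := x10.
have Pn := P_neq0 x1 xinc xN.
have ccn := cc_neq0 x1 xinc xN.
have wn := w_neq0 x1 xinc xN.
have yn := y_neq0 x1 xinc xN.
have omn := omx_neq0 x1 xinc xN.
have nf := nev_formula x1 xinc xN.
have piv : forall i j, (1 <= j)%N -> (j <= i)%N -> (i <= n.+1)%N ->
   nev_pivot (bernstein_vandermonde n x)^T i j =
   cc R n i * w n x j * y x j ^+ (i.-1 - j.-1) * P x j.-1 (y x j).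
  move=> i j H1 H2 H3; rewrite /nev_pivot nf //; try lia.
  rewrite /f.
  have -> : minn j.-1 i.-1 = j.-1 by lia.
  by rewrite ifF //; lia.
split.
- move=> i j H1 H2 H3; rewrite piv //.
  have hp : P x j.-1 (y x j) != 0.
    have := Pn j.-1.
    have -> : j.-1.+1 = j by lia.
    by apply; lia.
  have hc : cc R n i != 0 by apply: ccn; lia.
  have hw : w n x j != 0 by apply: wn; lia.
  have hy : y x j != 0 by apply: yn; lia.
  by rewrite !mulf_neq0 // expf_neq0.
- move=> i j /andP [H1 H2] /andP [H3 H4].
  rewrite /nev_mult !piv //; try lia.
  have hc' : cc R n i.-1 != 0 by apply: ccn; lia.
  have hw : w n x j != 0 by apply: wn; lia.
  have hy : y x j != 0 by apply: yn; lia.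
  have hp : P x j.-1 (y x j) != 0.
    have := Pn j.-1.
    have -> : j.-1.+1 = j by lia.
    by apply; lia.
  have hx : 1 - x j != 0 by apply: omn; lia.
  have hi : (i.-1)%:R != 0 :> R by rewrite pnatr_eq0; lia.
  have hbin : cc R n i * (i.-1)%:R = cc R n i.-1 * (n.+2 - i)%:R.
    rewrite /cc -!natrM; congr (_%:R).
    have := mul_bin_left n i.-2.
    have -> : i.-2.+1 = i.-1 by lia.
    have -> : (n - i.-2 = n.+2 - i)%N by lia.
    by move=> h; rewrite mulnC h mulnC.
  have -> : (i.-1 - j.-1 = (i.-1.-1 - j.-1).+1)%N by lia.
  rewrite exprSr.
  have hye : y x j ^+ (i.-1.-1 - j.-1) != 0 by rewrite expf_neq0.
  move: hc' hw hy hp hye hbin.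
  rewrite /y.
  set C := cc R n i; set C1 := cc R n i.-1; set W := w n x j;
    set Pj := P x _ _; set Ye := (_ ^+ (i.-1.-1 - j.-1)).
  move=> hc' hw hy hp hye hbin.
  have -> : C = C1 * (n.+2 - i)%:R / (i.-1)%:R.
    by rewrite -hbin; field.
  by field; rewrite hc' hw hp hye hx hi.
Qed.
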